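(* Let $n\ge 2$ be an integer and let $A$ be a Bernstein set of $(L_n,\tau_E|_{L_n})$. Then $(X_n,\tau(A))$ is Lindelöf but not perfect.
   Context: For $\overline{x},\overline{a}\in\mathbb R^n$ let $|\overline{x}-\overline{a}|$ be the Euclidean distance and $B(\overline{a},\epsilon)=\{\overline{x}\in\mathbb R^n:|\overline{x}-\overline{a}|<\epsilon\}$. Let $P_n=\{\overline{x}\in\mathbb R^n: x_n>0\}$, $L_n=\{\overline{x}\in\mathbb R^n: x_n=0\}$, $X_n=P_n\cup L_n$, and let $\tau_E$ denote the Euclidean topology on $X_n$ (so $(L_n,\tau_E|_{L_n})$ is homeomorphic to $\mathbb R^{n-1}$). For $\overline{a}\in L_n$ and $\epsilon>0$ put $\overline{a(\epsilon)}=(a_1,\dots,a_{n-1},\epsilon)$ and $\tilde B(\overline{a},\epsilon)=\{\overline{a}\}\cup B(\overline{a(\epsilon)},\epsilon)$. For $A\subseteq L_n$, the topology $\tau(A)$ on $X_n$ is generated by the local bases: at $\overline{a}\in P_n$, the sets $B(\overline{a},\epsilon)$ with $0<\epsilon<a_n$; at $\overline{a}\in A$, the sets $B(\overline{a},\epsilon)\cap X_n$ with $\epsilon>0$; at $\overline{a}\in L_n\setminus A$, the sets $\tilde B(\overline{a},\epsilon)$ with $\epsilon>0$. A subset $A$ of $(L_n,\tau_E|_{L_n})$ is a Bernstein set if both $A$ and $L_n\setminus A$ intersect every uncountable compact subset of $(L_n,\tau_E|_{L_n})$. A space is perfect if every closed set is a $G_\delta$-set. *)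

(* Defs.v *)
From HB Require Import structures.
From mathcomp Require Import all_boot all_order all_algebra.
From mathcomp Require Import all_classical all_reals all_analysis.
Set Implicit Arguments. Unset Strict Implicit. Unset Printing Implicit Defensive.
Import Order.TTheory GRing.Theory Num.Theory.
Import numFieldNormedType.Exports.
Local Open Scope classical_set_scope.
Local Open Scope ring_scope.

Section Defs.
Variables (R : realType) (n : nat).

(* points of R^n are row vectors; coordinate k (0-based, so x_{k+1} in the paper) *)
Definition pt := 'rV[R]_n.

Definition coord (x : pt) (k : nat) : R :=
  odflt 0 (omap (fun i : 'I_n => x ord0 i) (insub k)).

Definition lastc (x : pt) : R := coord x n.-1.

Definition edist (x a : pt) : R :=
  Num.sqrt (\sum_(i < n) (x ord0 i - a ord0 i) ^+ 2).

Definition eball (a : pt) (eps : R) : set pt := [set x | edist x a < eps].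

Definition Pn : set pt := [set x | 0 < lastc x].
Definition Ln : set pt := [set x | lastc x = 0].
Definition Xn : set pt := Pn `|` Ln.

Definition a_eps (a : pt) (eps : R) : pt :=
  \row_(i < n) (if (i : nat) == n.-1 then eps else a ord0 i).

Definition tball (a : pt) (eps : R) : set pt := [set a] `|` eball (a_eps a eps) eps.

Definition tau_basic (A : set pt) (a : pt) (U : set pt) : Prop :=
  exists eps : R, 0 < eps /\
    [\/ Pn a /\ eps < lastc a /\ U = eball a eps,
        A a /\ U = eball a eps `&` Xn
      | (Ln `\` A) a /\ U = tball a eps].

Definition tau_open (A : set pt) (U : set pt) : Prop :=
  U `<=` Xn /\ forall a, U a -> exists V, tau_basic A a V /\ V `<=` U.

Definition tau_closed (A : set pt) (F : set pt) : Prop :=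
  F `<=` Xn /\ tau_open A (Xn `\` F).

Definition tau_Gdelta (A : set pt) (F : set pt) : Prop :=
  exists G : nat -> set pt, (forall k, tau_open A (G k)) /\ F = \bigcap_k G k.

Definition tau_Lindelof (A : set pt) : Prop :=
  forall C : set (set pt), (forall U, C U -> tau_open A U) ->
    Xn `<=` \bigcup_(U in C) U ->
    exists D : set (set pt), [/\ D `<=` C, countable D & Xn `<=` \bigcup_(U in D) U].

Definition tau_perfect (A : set pt) : Prop :=
  forall F, tau_closed A F -> tau_Gdelta A F.

(* A subset of L_n is compact in the
   subspace topology iff it is compact in R^n (library topology of 'rV[R]_n,
   which is the Euclidean topology). *)
Definition Bernstein (A : set pt) : Prop :=
  A `<=` Ln /\
  forall K : set pt, K `<=` Ln -> compact K -> ~ countable K ->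
    K `&` A !=set0 /\ K `&` (Ln `\` A) !=set0.

End Defs.

(* Main.v *)
Require Import Defs.
From HB Require Import structures.
From mathcomp Require Import all_boot all_order all_algebra.
From mathcomp Require Import all_classical all_reals all_analysis.
From mathcomp Require Import ring lra measurable_realfun.
Set Implicit Arguments. Unset Strict Implicit. Unset Printing Implicit Defensive.
Import Order.TTheory GRing.Theory Num.Theory.
Import numFieldNormedType.Exports.
Local Open Scope classical_set_scope.
Local Open Scope ring_scope.
Lemma lt_pred n : (0 < n)%N -> (n.-1 < n)%N. Proof. by case: n. Qed.

Section Basic.
Variables (R : realType) (n : nat).

Lemma ballE (c y : 'rV[R]_n) r : 0 < r ->
  ball c r y <-> forall j, `|c ord0 j - y ord0 j| < r.
Proof.
move=> r0; split.
  by move=> [_ H] j; have := H ord0 j.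
move=> H; split => // i j; rewrite (ord1 i); exact: H.
Qed.

Lemma lastcE (h : (0 < n)%N) (x : pt R n) : lastc x = x ord0 (Ordinal (lt_pred h)).
Proof.
rewrite /lastc /Defs.coord; case: (@insubP _ _ (ordinal n) n.-1) => [j _ hj /=|]; last by rewrite lt_pred.
by have -> : j = Ordinal (lt_pred h) by apply: val_inj.
Qed.

Lemma edist_ge (x a : pt R n) i : `|x ord0 i - a ord0 i| <= Defs.edist x a.
Proof.
rewrite /Defs.edist -sqrtr_sqr ler_sqrt; last by rewrite sumr_ge0 // => j _; rewrite sqr_ge0.
rewrite (bigD1 i) //= lerDl sumr_ge0 // => j _; exact: sqr_ge0.
Qed.

Lemma edist_lt (h : (1 < n)%N) (x a : pt R n) e : 0 < e ->
  (forall i, `|x ord0 i - a ord0 i| < e / n%:R) -> Defs.edist x a < e.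
Proof.
move=> e0 H.
have n0 : 0 < n%:R :> R by rewrite ltr0n; case: n h.
have n2 : 2%:R <= n%:R :> R by rewrite ler_nat.
rewrite /Defs.edist; apply: (@lt_le_trans _ _ (Num.sqrt (e^+2))); last by rewrite sqrtr_sqr gtr0_norm.
rewrite ltr_sqrt ?exprn_gt0 //.
apply: (@le_lt_trans _ _ (\sum_(i < n) (e / n%:R) ^+ 2)).
  apply: ler_sum => i _.
  have := H i; rewrite ltr_norml => /andP [h1 h2].
  have d0 : 0 < e / n%:R by rewrite divr_gt0.
  nra.
rewrite sumr_const card_ord -[_ *+ n]mulr_natr.
have -> : (e / n%:R) ^+ 2 * n%:R = e ^+ 2 / n%:R by field; rewrite gt_eqF.
rewrite ltr_pdivrMr // ltr_pMr ?exprn_gt0 //.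
by apply: lt_le_trans n2; rewrite ltr1n.
Qed.
End Basic.
Section Meas.
Variable R : realType.
Local Notation mu := (@lebesgue_measure R).

Lemma uncountable_compact_avoid (E : set R) : countable E ->
  exists V : set R, [/\ compact V, V `<=` `[0, 1]%classic, ~ countable V &
     forall t, V t -> ~ E t].
Proof.
move=> cE.
have mE : measurable E := countable_measurable (fun t => measurable_set1 t) cE.
set I := `[(0:R), 1]%classic.
set M := I `\` E.
have mI : measurable (I) by exact: measurable_itv.
have mM : measurable M by exact: measurableD.
have muI : mu I = 1%E.
  by rewrite lebesgue_measure_itv /= lte_fin ltr01 /= oppr0 adde0.
have Mfin : (mu M < +oo)%E.
  apply: (@le_lt_trans _ _ (mu I)); last by rewrite muI ltry.
  by apply: le_measure; rewrite ?inE //; move=> x [].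

have h2 : (0:R) < 1/2 by lra.
have [V [cV VM muMV]] := lebesgue_regularity_inner mM Mfin h2.
have mV : measurable V := compact_measurable cV.
exists V; split => //.
- by move=> x /VM [].
- move=> cntV.
  have V0 : mu V = 0%E by apply: countable_lebesgue_measure0.
  have E0 : mu E = 0%E by apply: countable_lebesgue_measure0.
  have mMV : measurable (M `\` V) by exact: measurableD.
  have : (mu I <= mu (((M `\` V) `|` V) `|` E))%E.
    have sub : I `<=` ((M `\` V) `|` V) `|` E.
      move=> x Ix; have [Ex|nEx] := pselect (E x); first by right.
      left; have [Vx|nVx] := pselect (V x); first by right.
      by left; split.
    apply: le_measure => //; rewrite inE //.
    by apply: measurableU => //; exact: measurableU.
  have U1 : (mu (M `\` V `|` V `|` E) <= mu (M `\` V `|` V) + mu E)%E.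
    by apply: measureU2 => //; exact: measurableU.
  have U2 : (mu (M `\` V `|` V) <= mu (M `\` V) + mu V)%E by apply: measureU2.
  rewrite muI => h1.
  have : (1 <= mu (M `\` V))%E.
    apply: (le_trans h1); apply: (le_trans U1); rewrite E0 adde0.
    by apply: (le_trans U2); rewrite V0 adde0.
  move=> h3; have := le_lt_trans h3 muMV; rewrite lte_fin; lra.
- by move=> t /VM [].
Qed.
End Meas.

Section Emb.
Variables (R : realType) (n : nat) (h : (1 < n)%N).
Let h0 : (0 < n)%N. Proof. by apply: ltn_trans h. Qed.
Let i0 : 'I_n := Ordinal h0.
Definition emb (t : R) : 'rV[R]_n := \row_(i < n) (if i == i0 then t else 0).

Lemma embK t : emb t ord0 i0 = t. Proof. by rewrite mxE eqxx. Qed.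

Lemma emb_Ln t : Ln (emb t).
Proof.
rewrite /Ln /= (lastcE h0) mxE; case: eqP => // /(congr1 val) /=.
by case: n h => // -[].
Qed.

Lemma emb_cont : continuous emb.
Proof.
move=> t B /nbhs_ballP [e e0 eB]; apply/nbhs_ballP; exists e => // s ts.
apply: eB; apply/ballE => // j; rewrite !mxE; case: ifP => _.
  exact: ts.
by rewrite subrr normr0.
Qed.

Lemma uncountable_avoid (D : set (pt R n)) : countable D ->
  exists K : set (pt R n), [/\ K `<=` @Ln R n, compact K, ~ countable K &
     forall x, K x -> ~ D x].
Proof.
move=> /countable_injP [f finj].
have cE : countable (emb @^-1` D).
  apply/countable_injP; exists (f \o emb) => x y; rewrite !inE => Dx Dy /= fxy.
  have e := finj (emb x) (emb y) (mem_set Dx) (mem_set Dy) fxy.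
  by rewrite -(embK x) -(embK y) e.
have [V [cV _ ncV VE]] := uncountable_compact_avoid cE.
exists (emb @` V); split.
- by move=> y [t tV <-]; exact: emb_Ln.
- apply: continuous_compact => //; apply: continuous_subspaceT => x.
  exact: emb_cont.
- move=> /countable_injP [g ginj]; apply: ncV; apply/countable_injP.
  exists (g \o emb) => x y; rewrite !inE => Vx Vy /= gxy.
  have e := ginj (emb x) (emb y) (mem_set (ex_intro2 _ _ x Vx erefl)) (mem_set (ex_intro2 _ _ y Vy erefl)) gxy.
  by rewrite -(embK x) -(embK y) e.
- by move=> y [t Vt <-] Dt; exact: (VE t Vt).
Qed.
End Emb.

Section Main.
Variables (R : realType) (n : nat) (h : (1 < n)%N).
Let h0 : (0 < n)%N. Proof. by apply: ltn_trans h. Qed.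
Let il : 'I_n := Ordinal (lt_pred h0).
Local Notation P := (pt R n).

Lemma open_nLn : open (~` @Ln R n).
Proof.
rewrite openE => x nLx; rewrite /interior; apply/nbhs_ballP.
have nx : x ord0 il != 0 by apply/eqP => e; apply: nLx; rewrite /Ln /= (lastcE h0).
have nx0 : 0 < `|x ord0 il| by rewrite normr_gt0.
exists `|x ord0 il|; first exact: nx0.
move=> y xy; have := (ballE _ _ nx0).1 xy il.
by move=> + Ly; rewrite /Ln /= (lastcE h0) in Ly; rewrite Ly subr0 ltxx.
Qed.

Lemma closed_LnW (W : set P) : open W -> closed (@Ln R n `\` W).
Proof.
move=> oW; rewrite (_ : _ `\` _ = ~` (~` @Ln R n `|` W)); last by rewrite setCU setCK.
by apply: open_closedC; apply: openU => //; exact: open_nLn.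
Qed.

Lemma closed_countable (A : set P) (hA : Bernstein A) (S : set P) :
  S `<=` @Ln R n -> closed S -> (forall x, S x -> ~ A x) -> countable S.
Proof.
move=> SL cS SA.
pose Bx (m : nat) := [set v : 'rV[R]_n | forall i, `[- (m%:R : R), m%:R]%classic (v ord0 i)].
have cB m : compact (Bx m) by apply: (@rV_compact _ _ (fun=> `[- (m%:R : R), m%:R]%classic)) => i; exact: segment_compact.
have -> : S = \bigcup_(m in [set: nat]) (Bx m `&` S).
  apply/seteqP; split => [x Sx|x [m _ [_ Sx]] //].
  have s0 : 0 <= \sum_i `|x ord0 i| by apply: sumr_ge0 => i _.
  have := archi_boundP s0; set m := Num.Def.archi_bound _ => hm.
  exists m => //; split => // i /=; rewrite in_itv /= -ler_norml.
  apply: (le_trans _ (ltW hm)); rewrite (bigD1 i) //= lerDl.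
  by apply: sumr_ge0 => j _.
apply: bigcup_countable => // m _.
apply: contrapT => nc.
have [_ hK] := hA.
have [[y [[_ Sy] Ay]] _] := hK (Bx m `&` S) (fun x Hx => SL x Hx.2)
  (compact_closedI (cB m) cS) nc.
exact: SA y Sy Ay.
Qed.

Lemma basic_ball (A U : set P) x : A `<=` @Ln R n -> (Pn x \/ A x) ->
  tau_open A U -> U x -> exists2 d, 0 < d & ball x d `&` @Xn R n `<=` U.
Proof.
move=> AL Hx [_ HU] Ux.
have n0 : 0 < n%:R :> R by rewrite ltr0n.
have [V [[eps [e0 [[Px [_ Ve]]|[Ax Ve]|[[Lx nAx] _]]]] VU]] := HU x Ux.
- have d0 : 0 < eps / n%:R by rewrite divr_gt0.
  exists (eps / n%:R) => // y [xy _]; apply: VU; rewrite Ve /eball /=.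
  apply: edist_lt => // i; rewrite distrC; exact: (ballE _ _ d0).1 xy i.
- have d0 : 0 < eps / n%:R by rewrite divr_gt0.
  exists (eps / n%:R) => // y [xy Xy]; apply: VU; rewrite Ve; split => //.
  rewrite /eball /=.
  apply: edist_lt => // i; rewrite distrC; exact: (ballE _ _ d0).1 xy i.
- exfalso; case: Hx => [Px|//].
  by rewrite /Pn /= Lx ltxx in Px.
Qed.

Lemma rat_approx (x : P) (d : R) : 0 < d -> exists q : 'rV[rat]_n * rat,
  [/\ 0 < ratr q.2 :> R, ball (map_mx (@ratr R) q.1) (ratr q.2) x &
      ball (map_mx (@ratr R) q.1) (ratr q.2) `<=` ball x d].
Proof.
move=> d0.
have [r] : exists r : rat, ratr r \in `](d / 3), (d / 2)[ by apply: rat_in_itvoo; lra.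
rewrite in_itv /= => /andP [r1 r2].
have hq : forall i : 'I_n, exists q : rat,
    ratr q \in `](x ord0 i - d / 3), (x ord0 i + d / 3)[.
  by move=> i; apply: rat_in_itvoo; lra.
have [qf hqf] := choice hq.
have r0 : 0 < ratr r :> R by lra.
exists (\row_i qf i, r); split => //=.
- apply/ballE => // j; rewrite !mxE; move: (hqf j); rewrite in_itv /= => /andP [a b].
  rewrite ltr_norml; apply/andP; split; lra.
- move=> y /(ballE _ _ r0) yr; apply/ballE => // j.
  move: (yr j) (hqf j); rewrite !mxE in_itv /= ltr_norml => /andP [a b] /andP [c e].
  rewrite ltr_norml; apply/andP; split; lra.
Qed.

Lemma countableU2 T (X Y : set T) : countable X -> countable Y -> countable (X `|` Y).
Proof.
move=> cX cY; rewrite (_ : X `|` Y = \bigcup_(b in [set: bool]) (if b then X else Y)).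
  by apply: bigcup_countable => // -[].
apply/seteqP; split => [z [Xz|Yz]|z [[] _ ?]]; [by exists true|by exists false|by left|by right].
Qed.

Lemma lindelof (A : set P) (hA : Bernstein A) : tau_Lindelof A.
Proof.
move=> C hC cov.
have AL := hA.1.
pose B (q : 'rV[rat]_n * rat) : set P := ball (map_mx (@ratr R) q.1) (ratr q.2).
pose good (q : 'rV[rat]_n * rat) := 0 < ratr q.2 :> R /\ exists U, C U /\ B q `&` @Xn R n `<=` U.
have [sel hsel] : {sel : _ -> set P & forall q, good q -> C (sel q) /\ B q `&` @Xn R n `<=` sel q}.
  apply: (@choice _ _ (fun q U => good q -> C U /\ B q `&` @Xn R n `<=` U)) => q; have [[_ [U HU]]|ng] := pselect (good q); first by exists U.
  by exists set0.
have [sel2 hsel2] : {sel2 : P -> set P & forall x, Xn x -> C (sel2 x) /\ sel2 x x}.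
  apply: (@choice _ _ (fun x U => Xn x -> C U /\ U x)) => x; have [Xx|nX] := pselect (Xn x); last by exists set0.
  by have [U CU Ux] := cov x Xx; exists U.
pose W := \bigcup_(q in good) B q.
have PW : forall x, Pn x \/ A x -> W x.
  move=> x Hx; have Xx : Xn x by case: Hx => [?|/AL ?]; [left|right].
  have [U CU Ux] := cov x Xx.
  have [d d0 dU] := basic_ball AL Hx (hC U CU) Ux.
  have [q [q0 qx qd]] := rat_approx x d0.
  exists q => //; split => //; exists U; split => //.
  by move=> y [By Xy]; apply: dU; split => //; apply: qd.
pose S := @Ln R n `\` W.
have cS : countable S.
  apply: (closed_countable hA); first by move=> x [].
    by apply: closed_LnW; apply: bigcup_open => q _; exact: ball_open.
  by move=> x [_ nW] Ax; apply: nW; apply: PW; right.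
exists (sel @` good `|` sel2 @` S); split.
- move=> U [[q gq <-]|[x Sx <-]]; first exact: (hsel q gq).1.
  by apply: (hsel2 x _).1; right; exact: Sx.1.
- apply: countableU2; apply: sub_countable (card_image_le _ _) _ => //.
- move=> x Xx; have [[q gq Bqx]|nW] := pselect (W x).
    exists (sel q); first by left; exists q.
    exact: (hsel q gq).2 x (conj Bqx Xx).
  have Sx : S x.
    split; last exact: nW.
    by case: Xx => // Px; exfalso; apply: nW; apply: PW; left.
  exists (sel2 x); first by right; exists x.
  exact: (hsel2 x Xx).2.
Qed.

Lemma A_closed (A : set P) (hA : Bernstein A) : tau_closed A A.
Proof.
have AL := hA.1.
have n0 : 0 < n%:R :> R by rewrite ltr0n.
split; first by move=> x /AL Lx; right.
split; first by move=> x [].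
move=> x [Xx nAx]; case: Xx => [Px|Lx].
- have lx0 : 0 < lastc x by [].
  exists (eball x (lastc x / 2)); split.
    exists (lastc x / 2); split; first by rewrite divr_gt0.
    by apply: Or31; split => //; split => //; lra.
  move=> y ey.
  have := edist_ge y x il; rewrite -(lastcE h0) -(lastcE h0) => hy.
  have Py : 0 < lastc y.
    have := le_lt_trans hy ey; rewrite ltr_norml => /andP [a _]; lra.
  split; first by left.
  by move=> /AL Ly; rewrite /Ln /= in Ly; rewrite Ly ltxx in Py.
- exists (tball x 1); split.
    exists 1; split => //; by apply: Or33; split => //; split.
  move=> y [->|ey]; first by split => //; right.
  have := edist_ge y (a_eps x 1) il; rewrite -(lastcE h0) => hy.
  have e1 : a_eps x 1 ord0 il = 1 by rewrite /a_eps mxE eqxx.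
  rewrite e1 in hy.
  have Py : 0 < lastc y.
    have := le_lt_trans hy ey; rewrite ltr_norml => /andP [a _]; lra.
  split; first by left.
  by move=> /AL Ly; rewrite /Ln /= in Ly; rewrite Ly ltxx in Py.
Qed.

Lemma not_perfect (A : set P) (hA : Bernstein A) : ~ tau_perfect A.
Proof.
move=> hp; have AL := hA.1.
have [G [oG AG]] := hp A (A_closed hA).
have [dl hdl] : {dl : nat * P -> R & forall ka, A ka.2 ->
    0 < dl ka /\ ball ka.2 (dl ka) `&` @Xn R n `<=` G ka.1}.
  apply: (@choice _ _ (fun ka d => A ka.2 -> 0 < d /\ ball ka.2 d `&` @Xn R n `<=` G ka.1)).
  move=> [k a]; have [Aa|nAa] := pselect (A a); last by exists 1.
  have Gka : G k a by move: Aa; rewrite AG => /(_ k I).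
  have [d d0 dG] := basic_ball AL (or_intror Aa) (oG k) Gka.
  by exists d.
pose W k := \bigcup_(a in A) ball a (dl (k, a)).
pose S k := @Ln R n `\` W k.
have cS k : countable (S k).
  apply: (closed_countable hA); first by move=> x [].
    by apply: closed_LnW; apply: bigcup_open => q _; exact: ball_open.
  move=> x [_ nW] Ax; apply: nW; exists x => //.
  by apply: ballxx; exact: (hdl (k, x) Ax).1.
have sub : @Ln R n `\` A `<=` \bigcup_(k in [set: nat]) S k.
  move=> x [Lx nAx].
  have [k nG] : exists k, ~ G k x.
    apply: contrapT => hk; apply: nAx; rewrite AG => k _.
    by apply: contrapT => nG; apply: hk; exists k.
  exists k => //; split => // -[a Aa xa]; apply: nG.
  by apply: (hdl (k, a) Aa).2; split => //; right.
have cLA : countable (@Ln R n `\` A).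
  apply: sub_countable (subset_card_le sub) _.
  exact: bigcup_countable.
have [K [KL cK nK KD]] := uncountable_avoid h cLA.
have [_ [y [Ky LAy]]] := hA.2 K KL cK nK.
exact: KD y Ky LAy.
Qed.
End Main.

Theorem mainTheorem18 (R : realType) (n : nat) (hn : (2 <= n)%N)
  (A : set (pt R n)) (hA : Bernstein A) :
  tau_Lindelof A /\ ~ tau_perfect A.
Proof. by split; [exact: lindelof | exact: not_perfect]. Qed.
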